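(* Let $\lambda,d\ge0$ and let $\mu\ge1$ be an integer. Let $u\in\Gamma^*$ be a $\mu$-locally $(\lambda,d)$-quasi-geodesic word in $G$. Then there is a word $v\in\Gamma^*$ of length less than $|\Gamma|^\mu$ such that for all $x,y\in\Gamma^*$ the word $xuy$ is $\mu$-locally $(\lambda,d)$-quasi-geodesic if and only if $xvy$ is $\mu$-locally $(\lambda,d)$-quasi-geodesic. Moreover, if $u\ne v$ then $|v|\ge\mu-1$.
   Context: $G$ is a torsion-free non-elementary $\delta$-hyperbolic group generated by a finite set $\Sigma\subseteq G\setminus\{1\}$; $\Gamma=\Sigma\cup\bar\Sigma$ where $\bar\Sigma=\Sigma^{-1}$ is regarded as a disjoint copy of $\Sigma$, and $\pi:\Gamma^*\to G$ is the canonical morphism. For $w\in\Gamma^*$, $|w|$ is its length and $|w|_G$ is the length of a shortest word $u$ with $\pi(u)=\pi(w)$. A word $w$ is $(\lambda,d)$-quasi-geodesic if every factor $u$ of $w$ satisfies $|u|\le\lambda|u|_G+d$; it is $\mu$-locally $(\lambda,d)$-quasi-geodesic if every factor of $w$ of length at most $\mu$ is $(\lambda,d)$-quasi-geodesic. *)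

(* Defs.v *)
From mathcomp Require Import all_boot all_order all_algebra.
From mathcomp Require Export reals.
Set Implicit Arguments. Unset Strict Implicit. Unset Printing Implicit Defensive.
Import Order.TTheory GRing.Theory Num.Theory.
Local Open Scope ring_scope.

Section GroupDefs.
Variables (G : Type) (mul : G -> G -> G) (inv : G -> G) (one : G).

Definition is_group : Prop :=
  [/\ forall a b c, mul a (mul b c) = mul (mul a b) c,
      forall a, mul one a = a, forall a, mul a one = a,
      forall a, mul (inv a) a = one & forall a, mul a (inv a) = one].

Fixpoint gpow (g : G) (n : nat) : G :=
  if n is n'.+1 then mul g (gpow g n') else one.

Definition torsion_free : Prop :=
  forall g n, (0 < n)%N -> gpow g n = one -> g = one.

Definition virtually_cyclic : Prop :=
  exists h : G, exists reps : seq G, forall g, exists2 i, (i < size reps)%N &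
    exists n : nat, g = mul (nth one reps i) (gpow h n) \/
                    g = mul (nth one reps i) (gpow (inv h) n).

(* Generators: Sigma is indexed by a finite type S via an injective map sigma;
   Gamma = Sigma ⊔ Sigma^{-1} is the sum type S + S. *)
Variables (S : finType) (sigma : S -> G).

Definition Gam := (S + S)%type.

Definition letter (a : Gam) : G :=
  match a with inl s => sigma s | inr s => inv (sigma s) end.

Definition piw (w : seq Gam) : G := foldr (fun a g => mul (letter a) g) one w.

Definition generates : Prop := forall g, exists w, piw w = g.

Definition geo_len (g : G) (n : nat) : Prop :=
  (exists w, size w = n /\ piw w = g) /\ (forall w, piw w = g -> (n <= size w)%N).

Definition gdist (g h : G) (n : nat) : Prop := geo_len (mul (inv g) h) n.

(* delta-hyperbolicity via the Gromov four-point condition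
   (x|y)_w >= min((x|z)_w, (y|z)_w) - delta, with
   (x|y)_w = (d(w,x) + d(w,y) - d(x,y)) / 2. *)
Definition hyperbolic (R : realType) (delta : R) : Prop :=
  forall w x y z (dwx dwy dwz dxy dxz dyz : nat),
    gdist w x dwx -> gdist w y dwy -> gdist w z dwz ->
    gdist x y dxy -> gdist x z dxz -> gdist y z dyz ->
    let gp a b c : R := (a%:R + b%:R - c%:R) / 2 in
    Num.min (gp dwx dwz dxz) (gp dwy dwz dyz) - delta <= gp dwx dwy dxy.

Definition is_factor (u w : seq Gam) : Prop := exists x y, w = x ++ u ++ y.

Definition quasi_geodesic (R : realType) (lam d : R) (w : seq Gam) : Prop :=
  forall u, is_factor u w -> forall n, geo_len (piw u) n ->
    (size u)%:R <= lam * n%:R + d.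

Definition loc_quasi_geodesic (R : realType) (mu : nat) (lam d : R)
    (w : seq Gam) : Prop :=
  forall u, is_factor u w -> (size u <= mu)%N -> quasi_geodesic lam d u.

End GroupDefs.

(* Main.v *)
Require Import Defs.
From mathcomp Require Import all_boot all_order all_algebra.
From mathcomp Require Import reals.
Import Order.TTheory GRing.Theory Num.Theory.
From mathcomp Require Import zify.
Set Implicit Arguments. Unset Strict Implicit.

Definition AF (T : Type) (Q : seq T -> Prop) (mu : nat) (w : seq T) : Prop :=
  forall i k, (k <= mu)%N -> Q (take k (drop i w)).

Lemma drop_cat_le (T : Type) n (s1 s2 : seq T) :
  (n <= size s1)%N -> drop n (s1 ++ s2) = drop n s1 ++ s2.
Proof.
move=> H; rewrite drop_cat; case: ltnP => H2 //.
have -> : n = size s1 by lia.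
by rewrite subnn drop0 drop_size.
Qed.

Lemma drop_cat_ge (T : Type) n (s1 s2 : seq T) :
  (size s1 <= n)%N -> drop n (s1 ++ s2) = drop (n - size s1) s2.
Proof.
move=> H; rewrite drop_cat; case: ltnP => H2 //; lia.
Qed.

Lemma take_drop_cat (T : Type) i k (s1 s2 : seq T) :
  (i + k <= size s1)%N -> take k (drop i (s1 ++ s2)) = take k (drop i s1).
Proof.
move=> H; rewrite drop_cat_le; last lia.
rewrite take_cat size_drop; case: ltnP => H2 //.
have -> : k = size s1 - i by lia.
by rewrite subnn take0 cats0 -(size_drop i s1) take_size.
Qed.

Lemma shift_lem (T : Type) (m a b j : nat) (x u y : seq T) :
  (m <= a)%N -> (a <= b)%N -> (b <= size u)%N ->
  drop (a - m) (take a u) = drop (b - m) (take b u) ->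
  (size x + (a - m) <= j)%N ->
  drop j (x ++ (take a u ++ drop b u) ++ y) = drop (j + (b - a)) (x ++ u ++ y).
Proof.
move=> h1 h2 h3 Hw hj.
set t := j - (size x + (a - m)).
have -> : j = t + (a - m) + size x by lia.
have -> : t + (a - m) + size x + (b - a) = t + (b - m) + size x by lia.
rewrite -!drop_drop !(drop_size_cat _ (erefl (size x))).
rewrite -catA (@drop_cat_le _ (a - m)); last by rewrite size_takel; lia.
have E : u ++ y = take b u ++ (drop b u ++ y) by rewrite catA cat_take_drop.
rewrite E (@drop_cat_le _ (b - m)); last by rewrite size_takel; lia.
by rewrite Hw.
Qed.

Lemma cut_equiv (T : Type) (Q : seq T -> Prop) (m a b : nat) (u : seq T) :
  AF Q m.+1 u -> (m <= a)%N -> (a < b)%N -> (b + m <= size u)%N ->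
  drop (a - m) (take a u) = drop (b - m) (take b u) ->
  forall x y, AF Q m.+1 (x ++ u ++ y) <-> AF Q m.+1 (x ++ (take a u ++ drop b u) ++ y).
Proof.
move=> Hu h1 h2 h3 Hw x y; split => H i k hk.
- case: (leqP (size x + (a - m)) i) => hi.
    rewrite (@shift_lem T m a b i x u y h1 (ltnW h2)) //; try lia; exact: H.
  have E1 : x ++ (take a u ++ drop b u) ++ y = (x ++ take a u) ++ (drop b u ++ y)
    by rewrite !catA.
  have E2 : x ++ u ++ y = (x ++ take a u) ++ (drop a u ++ y)
    by rewrite -catA (catA (take a u)) cat_take_drop.
  have Hs : (i + k <= size (x ++ take a u))%N by rewrite size_cat size_takel; lia.
  have := H i k hk; rewrite E1 E2 !(take_drop_cat _ Hs); exact.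
- case: (leqP (i + k) (size x + a)) => hi.
    have E1 : x ++ (take a u ++ drop b u) ++ y = (x ++ take a u) ++ (drop b u ++ y)
      by rewrite !catA.
    have E2 : x ++ u ++ y = (x ++ take a u) ++ (drop a u ++ y)
      by rewrite -catA (catA (take a u)) cat_take_drop.
    have Hs : (i + k <= size (x ++ take a u))%N by rewrite size_cat size_takel; lia.
  have := H i k hk; rewrite E1 E2 !(take_drop_cat _ Hs); exact.
  case: (leqP (size x + b) i) => hi2.
    have -> : i = (i - (b - a)) + (b - a) by lia.
    rewrite -(@shift_lem T m a b (i - (b - a)) x u y h1 (ltnW h2)) //; try lia; exact: H.
  rewrite drop_cat_ge; last lia.
  rewrite take_drop_cat; last lia.
  exact: Hu.
Qed.

Lemma two_pow (N k : nat) : (2 <= N)%N -> (2 * k <= N ^ k)%N.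
Proof.
move=> hN; elim: k => [|k IH] //.
have h1 : (1 <= N ^ k)%N by rewrite expn_gt0; lia.
rewrite expnS; case: k IH h1 => [|k] IH h1; first by rewrite expn0; lia.
nia.
Qed.

Lemma find_cut (T : finType) (t0 : T) (m : nat) (u : seq T) :
  (2 <= #|T|)%N -> (#|T| ^ m.+1 <= size u)%N ->
  exists a b, [/\ (m <= a)%N, (a < b)%N, (b + m <= size u)%N &
    drop (a - m) (take a u) = drop (b - m) (take b u)].
Proof.
move=> hT hu.
have hp := two_pow m hT.
have hu2 : (#|T| ^ m + 2 * m <= size u)%N by rewrite expnS in hu; nia.
set M := (size u - 2 * m).+1.
pose f := fun i : 'I_M => [ffun t : 'I_m => nth t0 u (i + t)].
have : ~~ injectiveb f.
  apply/negP => /injectiveP Hi.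
  have := leq_card f Hi; rewrite card_ffun !card_ord; lia.
case/injectivePn => i [j] hij hf.
have key : forall i j : 'I_M, f i = f j -> drop (i + m - m) (take (i + m) u) = drop (j + m - m) (take (j + m) u).
  move=> i' j' hf'; apply: (@eq_from_nth _ t0).
    rewrite !size_drop !size_takel; have := ltn_ord i'; have := ltn_ord j'; lia.
  move=> t; rewrite size_drop size_takel; last by have := ltn_ord i'; lia.
  move=> ht.
  have htm : (t < m)%N by lia.
  have := congr1 (fun g : {ffun 'I_m -> T} => g (Ordinal htm)) hf'; rewrite /f !ffunE /=.
  rewrite !nth_drop !nth_take; [|lia|lia]; by rewrite !addnK.
case: (ltngtP i j) => hlt.
- exists (i + m), (j + m); split; try lia; last exact: key.
  have := ltn_ord j; lia.
- exists (j + m), (i + m); split; try lia; last by apply: key.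
  have := ltn_ord i; lia.
- by case/negP: hij; apply/eqP; apply: val_inj.
Qed.

Lemma main_gen (T : finType) (t0 : T) (Q : seq T -> Prop) (m : nat) :
  (2 <= #|T|)%N -> forall n (u : seq T), (size u <= n)%N -> AF Q m.+1 u ->
  exists v, [/\ (size v < #|T| ^ m.+1)%N,
    (forall x y, AF Q m.+1 (x ++ u ++ y) <-> AF Q m.+1 (x ++ v ++ y)) &
    (u <> v -> (m <= size v)%N)].
Proof.
move=> hT; elim=> [|n IH] u hn Hu.
  exists u; split=> //; rewrite (_ : size u = 0) //; last lia.
  by rewrite expn_gt0; lia.
case: (ltnP (size u) (#|T| ^ m.+1)) => hs.
  by exists u; split.
have [a [b [h1 h2 h3 Hw]]] := find_cut t0 hT hs.
set u' := take a u ++ drop b u.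
have Hc := cut_equiv Hu h1 h2 h3 Hw.
have Hu' : AF Q m.+1 u'.
  have := (Hc [::] [::]).1; rewrite /= !cats0; apply; exact: Hu.
have hs' : (size u' <= n)%N.
  rewrite /u' size_cat size_takel ?size_drop; lia.
have [v [hv1 hv2 hv3]] := IH u' hs' Hu'.
exists v; split=> //.
  by move=> x y; rewrite Hc hv2.
move=> _; case: (eqVneq u' v) => e; last by apply: hv3; apply/eqP.
rewrite -e /u' size_cat size_takel ?size_drop; lia.
Qed.

Unset Implicit Arguments. Set Strict Implicit.
Local Open Scope ring_scope.

Definition Qp (R : realType) (G : Type) (mul : G -> G -> G) (inv : G -> G) (one : G)
  (S : finType) (sigma : S -> G) (lam d : R) (f : seq (Gam S)) : Prop :=
  forall n, geo_len mul inv one sigma (piw mul inv one sigma f) n ->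
    (size f)%:R <= lam * n%:R + d.
Arguments Qp {R G} mul inv one {S} sigma lam d f.

Lemma lqg_AF (R : realType) (G : Type) (mul : G -> G -> G) (inv : G -> G) (one : G)
  (S : finType) (sigma : S -> G) (lam d : R) (mu : nat) (w : seq (Gam S)) :
  loc_quasi_geodesic mul inv one sigma mu lam d w <->
  AF (Qp mul inv one sigma lam d) mu w.
Proof.
split.
- move=> H i k hk n hg.
  apply: (H (take k (drop i w))).
  + exists (take i w), (drop k (drop i w)).
    by rewrite !cat_take_drop.
  + by rewrite size_take; case: ltnP => h; lia.
  + by exists [::], [::]; rewrite cats0.
  + exact: hg.
- move=> H u [x [y Ew]] hs u' [a [b Ea]] n hg.
  have E : w = (x ++ a) ++ u' ++ (b ++ y) by rewrite Ew Ea !catA.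
  have hs' : (size u' <= mu)%N by move: hs; rewrite Ea !size_cat; lia.
  have := H (size (x ++ a)) (size u') hs' n.
  by rewrite E drop_size_cat // take_size_cat //; apply.
Qed.
Arguments lqg_AF {R G} mul inv one {S} sigma lam d mu w.

Theorem mainTheorem6 (R : realType)
  (G : Type) (mul : G -> G -> G) (inv : G -> G) (one : G)
  (S : finType) (sigma : S -> G)
  (Hgrp : is_group mul inv one)
  (Htf : torsion_free mul one)
  (Hne : ~ virtually_cyclic mul inv one)
  (Hhyp : exists delta : R, 0 <= delta /\ hyperbolic mul inv one sigma delta)
  (Hinj : injective sigma)
  (Hnot1 : forall s, sigma s <> one)
  (Hgen : generates mul inv one sigma)
  (lam d : R) (mu : nat) (Hlam : 0 <= lam) (Hd : 0 <= d) (Hmu : (1 <= mu)%N)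
  (u : seq (Gam S))
  (Hu : loc_quasi_geodesic mul inv one sigma mu lam d u) :
  exists v : seq (Gam S),
    (size v < #|{: Gam S}| ^ mu)%N /\
    (forall x y : seq (Gam S),
       loc_quasi_geodesic mul inv one sigma mu lam d (x ++ u ++ y) <->
       loc_quasi_geodesic mul inv one sigma mu lam d (x ++ v ++ y)) /\
    (u <> v -> (mu - 1 <= size v)%N).
Proof.
have hS : (0 < #|S|)%N.
  case: (pickP (@predT S)) => [s _|H0]; first by apply/card_gt0P; exists s.
  exfalso; apply: Hne.
  have Hall : forall g, g = one.
    move=> g; have [w <-] := Hgen g; case: w => [|a w] //.
    by case: a => s; have := H0 s.
  case: Hgrp => _ h1 _ _ _.
  exists one, [:: one] => g; exists 0%N => //; exists 0%N; left; rewrite (Hall g).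
  by rewrite /= h1.
have [s0 _] : exists s : S, true.
  by case/card_gt0P: hS => s _; exists s.
have hT : (2 <= #|{: Gam S}|)%N by rewrite card_sum; lia.
have hmu : mu = (mu.-1).+1 by lia.
have HuA := (lqg_AF mul inv one sigma lam d mu u).1 Hu.
rewrite hmu in HuA.
have [v [h1 h2 h3]] := @main_gen _ (inl s0) (Qp mul inv one sigma lam d) mu.-1 hT _ u (leqnn (size u)) HuA.
exists v; split; first by rewrite hmu.
split; last by move=> /h3; rewrite subn1.
move=> x y; rewrite !lqg_AF hmu; exact: h2.
Qed.
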